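(* Let $(X,d)$ be a uniformly locally finite extended metric space that is not amenable. Then for all $n\in\mathbb N$ and $R>0$ there exists $S>0$ such that for every finite set $M\subseteq X$ there are points $x_1,\dots,x_{n|M|}$ such that the closed balls $\bar B(x_i,R)$, $i=1,\dots,n|M|$, are pairwise disjoint and all contained in $\bar B(M,S)$.
   Context: An extended metric may take value $\infty$; $\bar B(A,R)=\{x:d(x,A)\le R\}$. Uniformly locally finite: $\sup_{x}|\bar B(x,R)|<\infty$ for all $R>0$. $\partial_RA=\{x\in X:d(x,A)\le R\text{ and }d(x,X\setminus A)\le R\}$. $(X,d)$ is amenable if for every $R,\varepsilon>0$ there is a finite nonempty $F\subseteq X$ with $|\partial_RF|\le\varepsilon|F|$. *)

(* Defs.v *)
From HB Require Import structures.
From mathcomp Require Import all_boot all_order all_algebra.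
From mathcomp Require Import finmap.
From mathcomp Require Import all_classical all_reals ereal.
Set Implicit Arguments. Unset Strict Implicit. Unset Printing Implicit Defensive.
Import Order.TTheory GRing.Theory Num.Theory.
Local Open Scope classical_set_scope.
Local Open Scope ring_scope.
Local Open Scope ereal_scope.

Section ExtMetric.
Context {R : realType} {X : choiceType}.

Definition ext_metric (d : X -> X -> \bar R) : Prop :=
  [/\ forall x y, d x y \is a fin_num \/ d x y = +oo,
      forall x y, 0 <= d x y,
      forall x y, d x y = 0 <-> x = y,
      forall x y, d x y = d y x &
      forall x y z, d x z <= d x y + d y z].

(* d(x, A) = inf_{a in A} d(x, a)  (= +oo when A is empty) *)
Definition dist_set (d : X -> X -> \bar R) (x : X) (A : set X) : \bar R :=
  ereal_inf [set d x a | a in A].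

Definition cball_set (d : X -> X -> \bar R) (A : set X) (r : R) : set X :=
  [set x | dist_set d x A <= r%:E].

Definition cball (d : X -> X -> \bar R) (x : X) (r : R) : set X :=
  cball_set d [set x] r.

Definition unif_loc_finite (d : X -> X -> \bar R) : Prop :=
  forall r : R, (0 < r)%R -> exists N : nat,
    forall x, finite_set (cball d x r) /\ (#|` fset_set (cball d x r)| <= N)%N.

Definition bdry (d : X -> X -> \bar R) (r : R) (A : set X) : set X :=
  [set x | dist_set d x A <= r%:E /\ dist_set d x (~` A) <= r%:E].

Definition amenable (d : X -> X -> \bar R) : Prop :=
  forall r eps : R, (0 < r)%R -> (0 < eps)%R ->
    exists F : {fset X}, F != fset0 /\
      finite_set (bdry d r [set` F]) /\
      ((#|` fset_set (bdry d r [set` F])|%:R : R) <= eps * (#|` F|%:R))%R.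

End ExtMetric.

(* Main.v *)
Require Import Defs.
From HB Require Import structures.
From mathcomp Require Import all_boot all_order all_algebra.
From mathcomp Require Import finmap.
From mathcomp Require Import all_classical all_reals ereal.
From mathcomp Require Import lra ring.
Import Order.TTheory GRing.Theory Num.Theory.
Local Open Scope classical_set_scope.
Local Open Scope ring_scope.

Section Aux.
Local Open Scope ereal_scope.
Context {R : realType} {X : choiceType} (d : X -> X -> \bar R) (hd : ext_metric d).

Lemma dist1 y x : dist_set d y [set x] = d y x.
Proof. by rewrite /dist_set image_set1 ereal_inf1. Qed.

Lemma dist_le y {A : set X} {a} : A a -> dist_set d y A <= d y a.
Proof. by move=> Aa; apply: ge_ereal_inf; exists (d y a) => //; exists a. Qed.

Lemma dist_adh {y} {A : set X} {s e : R} : dist_set d y A <= s%:E -> (0 < e)%R ->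
  exists2 a, A a & d y a < (s + e)%:E.
Proof.
move=> hs he.
have : dist_set d y A < (s + e)%:E.
  by apply: le_lt_trans hs _; rewrite lte_fin ltrDl.
by move/ereal_inf_lt => [_ [a Aa <-] h]; exists a.
Qed.

Lemma dsym x y : d x y = d y x.
Proof. by case: hd. Qed.

Lemma dtri x y z : d x z <= d x y + d y z.
Proof. by case: hd. Qed.

Lemma dxx x : d x x = 0.
Proof. by case: hd => _ _ h _ _; apply/h. Qed.

Lemma dge0 x y : 0 <= d x y.
Proof. by case: hd. Qed.

Lemma dist_comp (A B : set X) (s t : R) z :
  dist_set d z B <= t%:E -> (forall b, B b -> dist_set d b A <= s%:E) ->
  dist_set d z A <= (s + t + 1)%:E.
Proof.
move=> hz hB.
have h2 : (0 < 2^-1 :> R)%R by rewrite invr_gt0.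
have [b Bb hzb] := dist_adh hz h2.
have [a Aa hba] := dist_adh (hB b Bb) h2.
apply: le_trans (dist_le z Aa) _.
apply: le_trans (dtri z b a) _.
have -> : (s + t + 1 = (t + 2^-1) + (s + 2^-1))%R.
  by lra.
by rewrite EFinD; apply: leeD; apply: ltW.
Qed.

Lemma mem_cball_self (A : set X) (s : R) a : (0 <= s)%R -> A a -> cball_set d A s a.
Proof.
by move=> s0 Aa; rewrite /cball_set /=; apply: le_trans (dist_le a Aa) _; rewrite dxx lee_fin.
Qed.

Lemma cball_mono (A B : set X) s : A `<=` B -> cball_set d A s `<=` cball_set d B s.
Proof.
move=> AB z; rewrite /cball_set /= => h; apply: le_trans h.
by apply: ereal_inf_le_tmp => _ [a Aa <-]; exists a => //; apply: AB.
Qed.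

Hypothesis hulf : unif_loc_finite d.

Lemma fin_cball (F : {fset X}) (s : R) : (0 <= s)%R ->
  finite_set (cball_set d [set` F] s).
Proof.
move=> s0.
have [N hN] := hulf (s+1)%R (ltr_pwDr ltr01 s0 : (0 < s + 1)%R).
apply: (@sub_finite_set _ _ (\bigcup_(a in [set` F]) cball d a (s + 1))).
  move=> z hz; have [a Fa hza] := dist_adh hz ltr01.
  by exists a => //; rewrite /cball /cball_set /= dist1; apply: ltW.
by apply: bigcup_finite; [exact: finite_fset| move=> a _; case: (hN a)].
Qed.


Lemma card_split (A : {fset X}) (P : pred X) :
  (#|`A| <= #|`[fset z in A | P z]%fset| + #|`[fset z in A | ~~ P z]%fset|)%N.
Proof.
have eA : A = ([fset z in A | P z] `|` [fset z in A | ~~ P z])%fset.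
  apply/fsetP => z; rewrite !inE.
  by case: (z \in A); case: (P z).
by rewrite {1}eA cardfsU leq_subr.
Qed.


Lemma cover_count (rho : R) (N : nat)
  (hN : forall x, finite_set (cball d x rho) /\ (#|` fset_set (cball d x rho)| <= N)%N)
  (Y : seq X) (A : {fset X}) :
  (forall z, z \in A -> exists2 y, y \in Y & cball d y rho z) ->
  (#|`A| <= size Y * N)%N.
Proof.
elim: Y A => [|y Y IH] A hA /=.
  have -> : A = fset0.
    apply/fsetP => z; rewrite inE; apply/negbTE/negP => /hA [y].
    by rewrite in_nil.
  by rewrite cardfs0.
have fin := (hN y).1.
apply: leq_trans (card_split A (fun z => z \in fset_set (cball d y rho))) _.
rewrite mulSn leq_add //.
  apply: leq_trans (hN y).2; apply: fsubset_leq_card.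
  by apply/fsubsetP => z; rewrite !inE => /andP[].
apply: IH => z; rewrite !inE => /andP[zA zn].
have [y' + hy'] := hA z zA.
rewrite inE => /orP[/eqP ey|y'Y]; last by exists y'.
by subst y'; move: zn; rewrite in_fset_set // (mem_set hy').
Qed.

Lemma disj_far (r : R) a y : (r + r)%:E < d y a ->
  cball d a r `&` cball d y r = set0.
Proof.
move=> hya; rewrite -subset0 => z [].
rewrite /cball /cball_set /= !dist1 => hza hzy.
have : d y a <= (r + r)%:E.
  apply: le_trans (dtri y z a) _.
  by rewrite dsym EFinD; apply: leeD.
by rewrite leNgt hya.
Qed.

Lemma greedy (r : R) (hr : (0 < r)%R) (N : nat)
  (hN : forall x, finite_set (cball d x (r + r)) /\
        (#|` fset_set (cball d x (r + r))| <= N)%N) m :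
  forall A : {fset X}, (#|`A| <= m)%N -> exists Y : seq X,
  [/\ uniq Y, {subset Y <= A},
      (forall y1 y2, y1 \in Y -> y2 \in Y -> y1 != y2 ->
         cball d y1 r `&` cball d y2 r = set0) &
      (#|`A| <= size Y * N)%N].
Proof.
elim: m => [|m IH] A hA.
  exists [::]; split => //; by move: hA; rewrite leqn0 => /eqP->.
case: (fset_0Vmem A) => [->|[a aA]].
  by exists [::]; split => //; rewrite cardfs0.
pose A' := [fset z in A | (r + r)%:E < d z a]%fset.
have aA' : a \notin A'.
  rewrite !inE dxx negb_and; apply/orP; right.
  by rewrite lte_fin -leNgt addr_ge0 // ltW.
have hA' : (#|`A'| <= m)%N.
  have : (#|`A'| <= #|`(A `\ a)%fset|)%N.
    apply: fsubset_leq_card; apply/fsubsetP => z zA'.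
    rewrite !inE; apply/andP; split.
      by apply/eqP => eza; move: aA'; rewrite -eza zA'.
    by move: zA'; rewrite !inE => /andP[].
  by move: hA; rewrite (cardfsD1 a A) aA add1n ltnS => h2 h1; exact: leq_trans h1 h2.
have [Y' [uY' sY' dY' cY']] := IH A' hA'.
have fa : forall y, y \in Y' -> cball d a r `&` cball d y r = set0.
  move=> y /sY'; rewrite !inE => /andP[_ h]; exact: disj_far.
exists (a :: Y'); split.
- rewrite /= uY' andbT; apply/negP => /sY'; exact/negP.
- move=> y; rewrite inE => /orP[/eqP->//|/sY']; by rewrite !inE => /andP[].
- move=> y1 y2; rewrite !inE => /orP[/eqP->|h1] /orP[/eqP->|h2].
  + by rewrite eqxx.
  + by move=> _; apply: fa.
  + by move=> _; rewrite setIC; apply: fa.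
  + exact: dY'.
- apply: leq_trans (card_split A (fun z => (r + r)%:E < d z a)) _.
  rewrite /= mulSn addnC leq_add //.
  have fin := (hN a).1.
  apply: leq_trans (hN a).2; apply: fsubset_leq_card.
  apply/fsubsetP => z; rewrite !inE => /andP[_ h].
  rewrite in_fset_set // in_setE /cball /cball_set /= dist1.
  by rewrite leNgt.
Qed.


Lemma cball_le (A : set X) (s s' : R) : (s <= s')%R -> cball_set d A s `<=` cball_set d A s'.
Proof. by move=> ss z; rewrite /cball_set /= => h; apply: le_trans h _; rewrite lee_fin. Qed.

Variables (r0 eps : R) (hr0 : (0 < r0)%R) (heps : (0 < eps)%R).
Hypothesis hP : forall F : {fset X}, F != fset0 ->
  ~ (finite_set (bdry d r0 [set` F]) /\
     ((#|` fset_set (bdry d r0 [set` F])|%:R : R) <= eps * (#|` F|%:R))%R).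
Variables (N : nat) (hN : forall x, finite_set (cball d x (r0 + 1)) /\
   (#|` fset_set (cball d x (r0 + 1))| <= N)%N).

Let c := (eps / N.+1%:R)%R.
Let BB (G : {fset X}) := fset_set (cball_set d [set` G] (r0 + 1)).

Let r0p : (0 <= r0 + 1)%R.
Proof. by rewrite addr_ge0 // ltW. Qed.

Lemma sub_BB (G : {fset X}) : (G `<=` BB G)%fset.
Proof.
apply/fsubsetP => z zG; rewrite in_fset_set ?mem_set //; last exact: fin_cball.
exact: mem_cball_self.
Qed.

Lemma c_ge0 : (0 <= c)%R.
Proof. by rewrite /c divr_ge0 // ltW. Qed.

Lemma expand {F : {fset X}} : F != fset0 -> ((1 + c) * #|`F|%:R <= #|` BB F|%:R)%R.
Proof.
move=> F0.
have finB := fin_cball F _ r0p.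
set D := (BB F `\` F)%fset.
have cD : #|`BB F| = (#|`F| + #|`D|)%N.
  by rewrite cardfsDS ?sub_BB // subnKC // fsubset_leq_card // sub_BB.
have finBd : finite_set (bdry d r0 [set` F]).
  apply: sub_finite_set (fin_cball F _ (ltW hr0)).
  by move=> z [].
have cov : (#|` fset_set (bdry d r0 [set` F])| <= size D * N.+1)%N.
  apply: (@cover_count (r0 + 1)) => [x|z].
    by have [h1 h2] := hN x; split => //; apply: leqW.
  rewrite in_fset_set // in_setE => -[hz1 hz2].
  case: (boolP (z \in F)) => zF.
  - have [y ny hzy] := dist_adh hz2 ltr01.
    exists y.
      rewrite !inE; apply/andP; split; first by apply/negP.
      rewrite in_fset_set // mem_set //.
      rewrite /cball_set /=; apply: le_trans (dist_le y zF) _.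
      by rewrite dsym ltW.
    by rewrite /cball /cball_set /= dist1 ltW.
  - exists z; last by rewrite /cball /cball_set /= dist1 dxx lee_fin.
    rewrite !inE zF /= in_fset_set // mem_set //.
    rewrite /cball_set /=; apply: le_trans hz1 _; by rewrite lee_fin lerDl.
have hlt : (eps * #|`F|%:R < #|` fset_set (bdry d r0 [set` F])|%:R)%R.
  rewrite ltNge; apply/negP => h. exact: (hP F F0 (conj finBd h)).
have hcov : ((#|` fset_set (bdry d r0 [set` F])|%:R : R) <= #|`D|%:R * N.+1%:R)%R.
  by rewrite -natrM ler_nat.
have ceps : (c * N.+1%:R = eps)%R by rewrite /c mulfVK.
have hcD : (c * #|`F|%:R < #|`D|%:R)%R.
  rewrite -(ltr_pM2r (ltr0Sn _ N)) mulrAC ceps.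
  exact: lt_le_trans hlt hcov.
rewrite cD natrD; lra.
Qed.

Lemma iterate k (F : {fset X}) : F != fset0 ->
  [/\ ((1 + k%:R * c) * #|`F|%:R <= #|` iter k BB F|%:R)%R,
      [set` iter k BB F] `<=` cball_set d [set` F] (k%:R * (r0 + 2)) &
      (F `<=` iter k BB F)%fset].
Proof.
move=> F0; elim: k => [|k [IH1 IH2 IH3]].
  split => //=; first by rewrite mul0r addr0 mul1r.
  by move=> z zF; apply: mem_cball_self; rewrite // mul0r.
set G := iter k BB F.
have G0 : G != fset0.
  apply/negP => /eqP G0; move: IH3; rewrite -/G G0 fsubset0; exact/negP.
have hG := expand (F:=G) G0.
rewrite iterS -/G; split.
- have cp := c_ge0.
  have F0' : (0 <= (#|`F|%:R : R))%R by [].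
  have k0 : (0 <= (k%:R : R))%R by [].
  rewrite -addn1 natrD.
  apply: le_trans hG.
  have c1 : (0 <= 1 + c)%R by rewrite addr_ge0.
  apply: le_trans (ler_wpM2l c1 IH1).
  have := mulr_ge0 (mulr_ge0 k0 (mulr_ge0 cp cp)) F0'.
  nra.
- move=> z hz0; have : z \in BB G := hz0.
  rewrite /BB in_fset_set; last exact: fin_cball.
  rewrite in_setE => hz.
  have := @dist_comp [set` F] [set` G] _ _ z hz (fun b Gb => IH2 b Gb).
  have -> : (k%:R * (r0 + 2) + (r0 + 1) + 1 = k.+1%:R * (r0 + 2))%R.
    by rewrite -addn1 natrD; lra.
  by [].
- exact: fsubset_trans IH3 (sub_BB G).
Qed.

End Aux.

Theorem proposition3p7 (R : realType) (X : choiceType) (d : X -> X -> \bar R)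
  (hd : ext_metric d) (hulf : unif_loc_finite d) (hna : ~ amenable d) :
  forall (n : nat) (r : R), 0 < r ->
    exists S : R, 0 < S /\
      forall M : {fset X},
        exists x : 'I_(n * #|` M|) -> X,
          (forall i j, i != j -> cball d (x i) r `&` cball d (x j) r = set0) /\
          (forall i, cball d (x i) r `<=` cball_set d [set` M] S).
Proof.
move=> n r hr.
have [r0 [eps [hr0 [heps hP]]]] : exists r0 eps : R, (0 < r0)%R /\ (0 < eps)%R /\
  forall F : {fset X}, F != fset0 ->
  ~ (finite_set (bdry d r0 [set` F]) /\
     ((#|` fset_set (bdry d r0 [set` F])|%:R : R) <= eps * (#|` F|%:R))%R).
  apply: contrapT => H; apply: hna => r1 eps1 hr1 he1.
  apply: contrapT => hno; apply: H; exists r1, eps1; split => //; split => // F F0 [hf hc].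
  by apply: hno; exists F.
have r01 : (0 < r0 + 1)%R by rewrite addr_gt0.
have [N hN] := hulf (r0 + 1)%R r01.
have [N' hN'] := hulf (r + r)%R (addr_gt0 hr hr).
have hN'' : forall x, finite_set (cball d x (r + r)) /\
   (#|` fset_set (cball d x (r + r))| <= N'.+1)%N.
  by move=> x; have [h1 h2] := hN' x; split => //; apply: leqW.
set c := (eps / N.+1%:R)%R.
have cpos : (0 < c)%R by rewrite /c divr_gt0.
set K := (n * N'.+1)%N.
set k := (Num.truncn (K%:R / c)).+1.
have hKk : (K%:R < k%:R * c)%R.
  by rewrite -ltr_pdivrMr // truncnS_gt.
have k0 : (0 <= (k%:R : R))%R by [].
set S1 := (k%:R * (r0 + 2))%R.
have S10 : (0 <= S1)%R by rewrite mulr_ge0 // addr_ge0 // ltW.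
exists (S1 + r + 1)%R; split.
  lra.
move=> M.
set A := fset_set (cball_set d [set` M] S1).
have finA : finite_set (cball_set d [set` M] S1) by apply: fin_cball.
have [Y [uY sY dY cY]] := greedy d hd r hr _ hN'' _ _ (leqnn #|`A|).
have HY : (n * #|`M| <= size Y)%N.
  case: (boolP (M == fset0)) => [/eqP->|M0]; first by rewrite cardfs0 muln0.
  have [h1 h2 h3] := iterate d hd hulf r0 eps hr0 heps hP N hN k M M0.
  set G := iter k _ M in h1 h2 h3.
  have GA : (#|`G| <= #|`A|)%N.
    apply: fsubset_leq_card; apply/fsubsetP => z zG.
    by rewrite /A in_fset_set // mem_set //; apply: h2.
  rewrite -(@leq_pmul2r N'.+1) // -mulnA -/K.
  apply: leq_trans cY; apply: leq_trans GA.
  rewrite -(ler_nat R); apply: le_trans h1.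
  have -> : ((n * (#|`M| * N'.+1))%:R = (n * N'.+1)%:R * #|`M|%:R :> R)%R.
    by rewrite !natrM; ring.
  apply: ler_wpM2r => //.
  rewrite -/c; move: hKk; rewrite /K; lra.
exists (fun i => tnth (in_tuple Y) (widen_ord HY i)); split.
- move=> i j ij; apply: dY; try exact: mem_tnth.
  have /tuple_uniqP inj : uniq (in_tuple Y) by [].
  apply/negP => /eqP /inj /(congr1 val) /= /val_inj eij.
  by move: ij; rewrite eij eqxx.
- move=> i z hz.
  set y := tnth (in_tuple Y) (widen_ord HY i) in hz.
  have yA : y \in A by apply: sY; apply: mem_tnth.
  have hy : cball_set d [set` M] S1 y.
    by move: yA; rewrite /A in_fset_set // in_setE.
  rewrite /cball_set /=.
  apply: (@dist_comp _ _ d hd _ [set y] S1 r z hz).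
  by move=> b ->.
Qed.
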